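(* Let $p$ be a prime and $n\ge1$, and suppose $p^n-1=st$ with positive integers $s<t$ and $\gcd(s,t)=1$. Let $\alpha$ be a generator of $\mathbb{F}_{p^n}^\times$, $\beta=\alpha^t$, $\gamma=\alpha^s$. Let $S_0\subset\mathbb{Z}_s\times\mathbb{Z}_t$ be a linearly independent pattern of size $m$ with $m\mid n$, and let $r=n/m$. Then there exist shifts $(a_1,b_1),\dots,(a_r,b_r)\in\mathbb{Z}_s\times\mathbb{Z}_t$ such that the translates $T_{a_1,b_1}(S_0),\dots,T_{a_r,b_r}(S_0)$ are pairwise disjoint and their union $S=\bigcup_{k=1}^r T_{a_k,b_k}(S_0)$ is a basis pattern, and hence, for any nonzero $\mathbb{F}_p$-linear map $\psi:\mathbb{F}_{p^n}\to\mathbb{F}_p$, a sampling pattern for the array $B_{i,j}=\psi(\beta^i\gamma^j)$.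
   Context: $\mathbb{Z}_s=\mathbb{Z}/s\mathbb{Z}$, $\mathbb{Z}_t=\mathbb{Z}/t\mathbb{Z}$; $(i,j)\mapsto\beta^i\gamma^j$ is a well-defined bijection $\mathbb{Z}_s\times\mathbb{Z}_t\to\mathbb{F}_{p^n}^\times$. For a pattern $S\subset\mathbb{Z}_s\times\mathbb{Z}_t$, $A|_S=\{\beta^i\gamma^j:(i,j)\in S\}$. $S$ is linearly independent if the elements of $A|_S$ are $\mathbb{F}_p$-linearly independent, and a basis pattern if $A|_S$ is an $\mathbb{F}_p$-basis of $\mathbb{F}_{p^n}$. $T_{a,b}(i,j)=(i+a\bmod s,\ j+b\bmod t)$. For $(a,b)\in\mathbb{Z}_s\times\mathbb{Z}_t$, the value pattern of $S$ is $v_{a,b}=(B_{i+a,j+b})_{(i,j)\in S}\in\mathbb{F}_p^S$; $S$ is a sampling pattern if the $p^n-1$ vectors $v_{a,b}$ are pairwise distinct and are exactly the nonzero vectors of $\mathbb{F}_p^S$. *)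

(* Defs.v *)
From HB Require Import structures.
From mathcomp Require Import all_boot all_order all_algebra all_fingroup all_field.
Set Implicit Arguments. Unset Strict Implicit. Unset Printing Implicit Defensive.
Import GRing.Theory.
Local Open Scope ring_scope.

(* Indices (i,j) in Z_s x Z_t are represented by 'I_s * 'I_t (s,t >= 1). *)
Lemma ord_mod_lt (s : nat) (i : 'I_s) (a : nat) : ((i + a) %% s < s)%N.
Proof. by apply: ltn_pmod; apply: leq_ltn_trans (ltn_ord i). Qed.

Definition addmod (s : nat) (i : 'I_s) (a : nat) : 'I_s :=
  Ordinal (ord_mod_lt i a).

Definition Tsh (s t : nat) (ab : 'I_s * 'I_t) (ij : 'I_s * 'I_t) : 'I_s * 'I_t :=
  (addmod ij.1 ab.1, addmod ij.2 ab.2).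

Definition translate (s t : nat) (ab : 'I_s * 'I_t) (S : {set 'I_s * 'I_t}) :=
  [set Tsh ab x | x in S].

Section Patterns.
Variables (p : nat) (F : finFieldType) (chF : p \in [pchar F]).
Local Notation FF := (pPrimeCharType chF).
Variables (s t : nat) (beta gamma : F).

Definition Aelt (x : 'I_s * 'I_t) : FF := beta ^+ x.1 * gamma ^+ x.2.

(* A|_S as a sequence (S is a set, so no repeated indices) *)
Definition Arestr (S : {set 'I_s * 'I_t}) : seq FF := [seq Aelt x | x <- enum S].

Definition lin_indep_pattern (S : {set 'I_s * 'I_t}) : bool := free (Arestr S).

Definition basis_pattern (S : {set 'I_s * 'I_t}) : bool :=
  basis_of fullv (Arestr S).

Definition Barr (psi : FF -> 'F_p) (x : 'I_s * 'I_t) : 'F_p := psi (Aelt x).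

(* value pattern v_{a,b} in F_p^S, encoded as a finite function vanishing off S *)
Definition value_pattern (psi : FF -> 'F_p) (S : {set 'I_s * 'I_t})
    (ab : 'I_s * 'I_t) : {ffun 'I_s * 'I_t -> 'F_p} :=
  [ffun x => if x \in S then Barr psi (Tsh ab x) else 0].

Definition sampling_pattern (psi : FF -> 'F_p) (S : {set 'I_s * 'I_t}) : Prop :=
  injective (value_pattern psi S) /\
  forall w : {ffun 'I_s * 'I_t -> 'F_p},
    (w != 0 /\ forall x, x \notin S -> w x = 0) <->
    exists ab, value_pattern psi S ab = w.

End Patterns.

(* Main.v *)
Require Import Defs.
From HB Require Import structures.
From mathcomp Require Import all_boot all_order all_algebra all_fingroup all_field.
Import GRing.Theory.
Local Open Scope ring_scope.
From mathcomp Require Import zify.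

Lemma mod_cancel (s t a a' : nat) : coprime s t -> (a < s)%N -> (a' < s)%N ->
  (t * a == t * a' %[mod s])%N -> a = a'.
Proof.
move=> cst.
wlog h : a a' / (a' <= a)%N.
  move=> W ha ha' e; case: (leqP a' a) => h; first exact: W.
  by apply/esym/W => //; [exact: ltnW | rewrite eq_sym].
move=> ha ha'; rewrite eqn_mod_dvd ?leq_mul2l ?h ?orbT // -mulnBr.
rewrite Gauss_dvdr //.
move=> d; have : (a - a' < s)%N by lia.
move=> hl; move: d => /eqP; rewrite modn_small //; lia.
Qed.

Lemma Aelt_inj (p n s t : nat) (F : finFieldType) (chF : p \in [pchar F])
  (hst : (p ^ n - 1)%N = (s * t)%N) (hcop : coprime s t)
  (alpha : F) (halpha : (p ^ n - 1)%N.-primitive_root alpha) :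
  injective (@Aelt p F chF s t (alpha ^+ t) (alpha ^+ s)).
Proof.
move=> [a b] [a' b']; rewrite /Aelt /= -!exprM -!exprD => /eqP.
rewrite (eq_prim_root_expr halpha) hst chinese_remainder //.
case/andP => e1 e2.
have ea : a = a' :> nat.
  apply: (@mod_cancel s t a a' hcop (ltn_ord a) (ltn_ord a')).
  move: e1; rewrite [(t * a + _)%N]addnC [(t * a' + _)%N]addnC.
  by rewrite ![(s * _)%N]mulnC !modnMDl !(mulnC t).
have eb : b = b' :> nat.
  apply: (@mod_cancel t s b b' _ (ltn_ord b) (ltn_ord b')); first by rewrite coprime_sym.
  by move: e2; rewrite ![(t * _)%N]mulnC !modnMDl !(mulnC s).
by congr pair; apply: val_inj.
Qed.

Lemma AeltT (p s t : nat) (F : finFieldType) (chF : p \in [pchar F]) (beta gamma : F)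
  (hb : beta ^+ s = 1) (hg : gamma ^+ t = 1) (ab x : 'I_s * 'I_t) :
  Aelt chF beta gamma (Tsh ab x) = Aelt chF beta gamma x * Aelt chF beta gamma ab.
Proof.
rewrite /Aelt /Tsh /addmod /= !expr_mod // !exprD.
by rewrite mulrACA.
Qed.

Lemma Aelt_neq0 (p s t : nat) (F : finFieldType) (chF : p \in [pchar F]) (beta gamma : F)
  (hs : (0 < s)%N) (ht : (0 < t)%N)
  (hb : beta ^+ s = 1) (hg : gamma ^+ t = 1) (x : 'I_s * 'I_t) :
  Aelt chF beta gamma x != 0.
Proof.
rewrite /Aelt mulf_neq0 // expf_neq0 //.
  apply/eqP => b0; move: hb; rewrite b0 expr0n eqn0Ngt hs => /eqP.
  by rewrite eq_sym oner_eq0.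
apply/eqP => b0; move: hg; rewrite b0 expr0n eqn0Ngt ht => /eqP.
by rewrite eq_sym oner_eq0.
Qed.

Lemma cardFF (p n : nat) (F : finFieldType) (chF : p \in [pchar F])
  (hcard : #|F| = (p ^ n)%N) : #|pPrimeCharType chF| = (p ^ n)%N.
Proof. exact: hcard. Qed.

Lemma dimFF (p n : nat) (F : finFieldType) (chF : p \in [pchar F])
  (hp : prime p) (hcard : #|F| = (p ^ n)%N) : \dim (fullv : {vspace pPrimeCharType chF}) = n.
Proof. by rewrite pprimeChar_dimf (@cardFF p n F chF hcard) pfactorK. Qed.

Lemma Aelt_surj (p n s t : nat) (F : finFieldType) (chF : p \in [pchar F])
  (hcard : #|F| = (p ^ n)%N) (beta gamma : F)
  (hst : (p ^ n - 1)%N = (s * t)%N) (hs : (0 < s)%N) (ht : (0 < t)%N)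
  (hb : beta ^+ s = 1) (hg : gamma ^+ t = 1)
  (hinj : injective (@Aelt p F chF s t beta gamma)) (y : pPrimeCharType chF) :
  y != 0 -> exists ab : 'I_s * 'I_t, Aelt chF beta gamma ab = y.
Proof.
move=> y0.
have sub : [set Aelt chF beta gamma ab | ab : ('I_s * 'I_t)%type] \subset [set~ 0].
  apply/subsetP => z /imsetP[ab _ ->]; rewrite !inE.
  exact: Aelt_neq0.
have := subset_leqif_card sub.
rewrite cardsC1 (@cardFF p n F chF hcard) card_imset // card_prod !card_ord -hst subn1.
case=> _; rewrite eqxx => /esym/subsetP/(_ y); rewrite !inE y0 => /(_ isT) /imsetP[ab _ ->].
by exists ab.
Qed.

Lemma card_nz_vspace (p : nat) (F : finFieldType) (chF : p \in [pchar F]) (hp : prime p)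
  (W : {vspace pPrimeCharType chF}) :
  #|[set w in W] :\ 0| = (p ^ \dim W - 1)%N.
Proof.
have := cardsD1 0 [set w in W]; rewrite inE mem0v cardsE card_vspace card_Fp //.
by move=> ->; rewrite add1n subn1.
Qed.

Lemma greedy_step (p : nat) (F : finFieldType) (chF : p \in [pchar F]) (hp : prime p)
  (V W : {vspace pPrimeCharType chF}) :
  (0 < \dim V)%N -> (\dim W + \dim V <= \dim (fullv : {vspace pPrimeCharType chF}))%N ->
  exists2 x : pPrimeCharType chF, x != 0 & (W :&: (V * <[x]>) = 0)%VS.
Proof.
move=> hV hWV.
case: (boolP [exists x : pPrimeCharType chF, (x != 0) && ((W :&: V * <[x]>)%VS == 0%VS)]).
  by case/existsP => x /andP[x0 /eqP e]; exists x.
rewrite negb_exists => /forallP H; exfalso.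
pose B := [set z.1 / z.2 | z in setX ([set w in W] :\ 0) ([set v in V] :\ 0)].
have sub : [set~ 0] \subset B.
  apply/subsetP => x; rewrite !inE => x0.
  have := H x; rewrite x0 /= => Hc.
  set y := vpick (W :&: V * <[x]>)%VS.
  have y0 : y != 0 by rewrite vpick0.
  have : y \in (W :&: V * <[x]>)%VS by apply: memv_pick.
  rewrite memv_cap => /andP[yW /memv_cosetP[u uV yu]].
  have u0 : u != 0 by apply: contraNneq y0 => u0; rewrite yu u0 mul0r.
  apply/imsetP; exists (y, u); first by rewrite !inE y0 yW u0 uV.
  by rewrite /= yu mulrC mulKf.
have le1 := leq_trans (subset_leq_card sub) (leq_imset_card _ _).
have cF : #|pPrimeCharType chF| = (p ^ \dim (fullv : {vspace pPrimeCharType chF}))%N.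
  have := card_vspace (fullv : {vspace pPrimeCharType chF}); rewrite card_Fp // => <-.
  by apply: eq_card => x; rewrite memvf.
move: le1; rewrite cardsC1 cardsX !card_nz_vspace // cF.
have p2 := prime_gt1 hp.
have a1 : (1 <= p ^ \dim W)%N by rewrite expn_gt0 ltnW.
have b2 : (2 <= p ^ \dim V)%N.
  by apply: leq_trans (leq_pexp2l (ltnW p2) hV); rewrite expn1.
have ab : (p ^ \dim W * p ^ \dim V <= p ^ \dim (fullv : {vspace pPrimeCharType chF}))%N.
  by rewrite -expnD leq_pexp2l // ltnW.
move: a1 b2 ab; set a := (p ^ \dim W)%N; set b := (p ^ \dim V)%N.
set P := (p ^ _)%N; rewrite -/P.
move=> a1 b2 ab.
nia.
Qed.

Lemma greedy (p : nat) (F : finFieldType) (chF : p \in [pchar F]) (hp : prime p)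
  (V : {vspace pPrimeCharType chF}) (r : nat) :
  (0 < \dim V)%N -> (r * \dim V <= \dim (fullv : {vspace pPrimeCharType chF}))%N ->
  exists xs : seq (pPrimeCharType chF),
    [/\ size xs = r, all (fun x => x != 0) xs &
        \dim (\sum_(x <- xs) (V * <[x]>)%VS) = (r * \dim V)%N].
Proof.
move=> hV; elim: r => [|r IH] hr.
  by exists [::]; rewrite big_nil dimv0.
have [|xs [sz nz dimW]] := IH.
  by apply: leq_trans hr; rewrite leq_mul2r leqnSn orbT.
have [|x x0 cap0] := @greedy_step p F chF hp V (\sum_(x <- xs) (V * <[x]>)%VS) hV.
  by rewrite dimW addnC -mulSn.
exists (x :: xs); split => /=; first by rewrite sz.
  by rewrite x0 nz.
rewrite big_cons dimv_disjoint_sum; last by rewrite capvC.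
by rewrite dim_cosetv // dimW mulSn.
Qed.

Lemma sampling (p n s t : nat) (F : finFieldType) (chF : p \in [pchar F])
  (hp : prime p) (hcard : #|F| = (p ^ n)%N) (beta gamma : F)
  (hst : (p ^ n - 1)%N = (s * t)%N) (hs : (0 < s)%N) (ht : (0 < t)%N)
  (hb : beta ^+ s = 1) (hg : gamma ^+ t = 1)
  (hinj : injective (@Aelt p F chF s t beta gamma))
  (S : {set 'I_s * 'I_t}) (hS : basis_pattern chF beta gamma S)
  (psi : pPrimeCharType chF -> 'F_p)
  (hlin : forall (c : 'F_p) (x y : pPrimeCharType chF), psi (c *: x + y) = c * psi x + psi y)
  (hnz : exists x, psi x != 0) :
  sampling_pattern (chF := chF) beta gamma psi S.
Proof.
have psi0 : psi 0 = 0.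
  have h := hlin 1 0 0; rewrite addr0 scaler0 mul1r in h.
  by rewrite -(addrK (psi 0) (psi 0)) -h subrr.
have psiB : forall x y, psi (x - y) = psi x - psi y.
  move=> x y; have := hlin 1 (x - y) y; rewrite scale1r mul1r subrK => ->.
  by rewrite addrK.
have psi_sum : forall k (c : 'I_k -> 'F_p) (f : 'I_k -> pPrimeCharType chF),
    psi (\sum_i c i *: f i) = \sum_i c i * psi (f i).
  move=> k c f; elim/big_rec2: _ => [|i y1 y2 _ <-]; first by rewrite psi0.
  by rewrite hlin.
set X := Arestr chF beta gamma S.
have [spanX freeX] : <<X>>%VS = fullv /\ free X.
  by move: hS; rewrite /basis_pattern /basis_of => /andP[/eqP -> ->].
have sizeX : size X = #|S| by rewrite size_map -cardE.
have cardS : #|S| = n.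
  rewrite -sizeX -(@dimFF p n F chF hp hcard).
  apply/esym; apply: (@size_basis _ _ fullv _ (in_tuple X)); exact: hS.
have key : forall z, (forall x, x \in S -> psi (z * Aelt chF beta gamma x) = 0) -> z = 0.
  move=> z hz; apply/eqP; apply: contraT => z0; case: hnz => y.
  suff hall : forall u, psi (z * u) = 0 by rewrite -(mulVKf z0 y) hall eqxx.
  move=> u; have uX : u \in <<X>>%VS by rewrite spanX memvf.
  rewrite (@coord_span _ _ _ (in_tuple X) u uX) mulr_sumr.
  under eq_bigr do rewrite -scalerAr.
  rewrite psi_sum big1 // => i _.
  have : X`_i \in X by apply: mem_nth.
  by case/mapP => x; rewrite mem_enum => xS ->; rewrite hz // mulr0.
pose Phi (z : pPrimeCharType chF) : {ffun 'I_s * 'I_t -> 'F_p} :=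
  [ffun x => if x \in S then psi (z * Aelt chF beta gamma x) else 0].
have vpE : forall ab, @value_pattern p F chF s t beta gamma psi S ab = Phi (Aelt chF beta gamma ab).
  by move=> ab; apply/ffunP => x; rewrite !ffunE /Barr AeltT // mulrC.
have Phi_inj : injective Phi.
  move=> z1 z2 e; apply/eqP; rewrite -subr_eq0; apply/eqP; apply: key => x xS.
  have := congr1 (fun f : {ffun 'I_s * 'I_t -> 'F_p} => f x) e; rewrite /= !ffunE xS => h.
  by rewrite mulrBl psiB h subrr.
have Phi0 : Phi 0 = 0 by apply/ffunP => x; rewrite !ffunE mul0r psi0 if_same.
have PhiS : forall z, Phi z \in pffun_on 0 S predT.
  move=> z; apply/pffun_onP; split => // .
  apply/subsetP => x; rewrite inE /Phi ffunE; case: (x \in S) => //.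
split.
  by move=> a b; rewrite !vpE => /Phi_inj; exact: hinj.
move=> w; split.
  case=> w0 wS.
  have wP : w \in pffun_on 0 S predT.
    apply/pffun_onP; split => //.
    apply/subsetP => x; rewrite inE; apply: contraR => xS; rewrite wS //.
  have sub : [set Phi z | z : pPrimeCharType chF] \subset pffun_on 0 S predT.
    by apply/subsetP => f /imsetP[z _ ->].
  have := subset_leqif_card sub.
  rewrite card_pffun_on card_imset // (@cardFF p n F chF hcard) cardS.
  have -> : #|(predT : {pred 'F_p})| = p.
    by transitivity #|'F_p|; [apply: eq_card | exact: card_Fp].
  case=> _; rewrite eqxx => /esym/subsetP/(_ w wP)/imsetP[z _ wz].
  have z0 : z != 0 by apply: contraNneq w0 => z0; rewrite wz z0 Phi0.
  have [ab hab] := @Aelt_surj p n s t F chF hcard beta gamma hst hs ht hb hg hinj z z0.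
  by exists ab; rewrite vpE hab wz.
case=> ab <-; split.
  rewrite vpE; apply: contraNneq (@Aelt_neq0 p s t F chF beta gamma hs ht hb hg ab) => e.
  by apply/eqP; apply: Phi_inj; rewrite e Phi0.
by move=> x xS; rewrite ffunE (negbTE xS).
Qed.

Lemma card_bigcup_le (I T : finType) (P : pred I) (F : I -> {set T}) :
  (#|\bigcup_(i | P i) F i| <= \sum_(i | P i) #|F i|)%N.
Proof.
elim/big_rec2: _ => [|i n U _ leUn]; first by rewrite cards0.
by rewrite (leq_trans (leq_card_setU _ _).1) ?leq_add2l.
Qed.

Theorem mainTheorem4 (p n s t : nat) (F : finFieldType) (chF : p \in [pchar F])
  (hp : prime p) (hn : (1 <= n)%N) (hcard : #|F| = (p ^ n)%N)
  (hst : (p ^ n - 1)%N = (s * t)%N) (hs : (0 < s)%N) (hlt : (s < t)%N)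
  (hcop : coprime s t)
  (alpha : F) (halpha : (p ^ n - 1)%N.-primitive_root alpha)
  (S0 : {set 'I_s * 'I_t}) (m : nat) (hm : #|S0| = m) (hmn : (m %| n)%N)
  (hS0 : lin_indep_pattern chF (alpha ^+ t) (alpha ^+ s) S0) :
  exists sh : 'I_(n %/ m) -> 'I_s * 'I_t,
    (forall k l : 'I_(n %/ m), k != l ->
        [disjoint translate (sh k) S0 & translate (sh l) S0]) /\
    let S := \bigcup_(k < n %/ m) translate (sh k) S0 in
    basis_pattern chF (alpha ^+ t) (alpha ^+ s) S /\
    (forall psi : pPrimeCharType chF -> 'F_p,
        (forall (c : 'F_p) (x y : pPrimeCharType chF),
            psi (c *: x + y) = c * psi x + psi y) ->
        (exists x, psi x != 0) ->
        sampling_pattern (chF := chF) (alpha ^+ t) (alpha ^+ s) psi S).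
Proof.
have ht : (0 < t)%N by apply: leq_trans hlt.
set beta := alpha ^+ t; set gamma := alpha ^+ s.
have hb : beta ^+ s = 1 by rewrite /beta -exprM mulnC -hst prim_expr_order.
have hg : gamma ^+ t = 1 by rewrite /gamma -exprM -hst prim_expr_order.
have hinj := @Aelt_inj p n s t F chF hst hcop alpha halpha.
have m0 : (0 < m)%N.
  by rewrite lt0n; apply: contraTneq hmn => ->; rewrite dvd0n -lt0n.
set r := (n %/ m)%N.
have rm : (r * m)%N = n by rewrite divnK.
set A0 := Arestr chF beta gamma S0.
set V := (<<A0>>)%VS.
have dimV : \dim V = m.
  by move: hS0; rewrite /lin_indep_pattern /free -/A0 => /eqP ->; rewrite size_map -cardE.
have dimF := @dimFF p n F chF hp hcard.
have V0 : (0 < \dim V)%N by rewrite dimV.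
have rV : (r * \dim V <= \dim (fullv : {vspace pPrimeCharType chF}))%N.
  by rewrite dimV rm dimF.
have [xs [sz nz dimW]] := @greedy p F chF hp V r V0 rV.
have xnz : forall k : 'I_r, xs`_k != 0.
  by move=> k; apply: (allP nz); apply: mem_nth; rewrite sz.
pose def := (Ordinal hs, Ordinal ht).
pose sh (k : 'I_r) := odflt def [pick ab | Aelt chF beta gamma ab == xs`_k].
have hsh : forall k, Aelt chF beta gamma (sh k) = xs`_k.
  move=> k; rewrite /sh; case: pickP => [ab /eqP //| none] /=.
  have [ab hab] := @Aelt_surj p n s t F chF hcard beta gamma hst hs ht hb hg hinj _ (xnz k).
  by move: (none ab); rewrite hab eqxx.
have Tinj : forall ab : ('I_s * 'I_t)%type, injective (@Tsh s t ab).
  move=> ab x y e; apply: hinj.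
  have := congr1 (Aelt chF beta gamma) e; rewrite !AeltT //.
  by apply: mulIf; apply: Aelt_neq0.
pose T (k : 'I_r) := translate (sh k) S0.
have cT : forall k, #|T k| = m by move=> k; rewrite card_imset.
set S := \bigcup_(k < r) T k.
have cS_le : (#|S| <= n)%N.
  apply: leq_trans (card_bigcup_le _ _ _ _) _.
  by rewrite (eq_bigr (fun _ => m)) // sum_nat_const card_ord rm.
set X := Arestr chF beta gamma S.
have sumX : (\sum_(x <- xs) (V * <[x]>)%VS <= <<X>>)%VS.
  rewrite big_seq; apply: (big_ind (fun U => (U <= <<X>>)%VS)) => [|U1 U2 h1 h2|x xin]; first exact: sub0v.
    by rewrite subv_add h1 h2.
  have ki : (index x xs < r)%N by rewrite -sz index_mem.
  have -> : x = Aelt chF beta gamma (sh (Ordinal ki)) by rewrite hsh /= nth_index.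
  rewrite -limg_amulr limg_span; apply/span_subvP => _ /mapP[v vA0 ->].
  rewrite lfunE /=; move: vA0 => /mapP[y yS0 ->].
  rewrite -AeltT //; apply: memv_span; apply: map_f; rewrite mem_enum.
  by apply/bigcupP; exists (Ordinal ki) => //; apply: imset_f; rewrite -mem_enum.
have fullX : (fullv <= <<X>>)%VS.
  have := dimv_leqif_eq (subvf (\sum_(x <- xs) (V * <[x]>)%VS)).
  rewrite dimW dimV rm dimF => -[_]; rewrite eqxx => /esym/eqP <- //.
have cS : #|S| = n.
  apply/eqP; rewrite eqn_leq cS_le /=.
  rewrite -dimF (leq_trans (dimvS fullX)) // (leq_trans (dim_span _)) //.
  by rewrite size_map -cardE.
have hbasis : basis_pattern chF beta gamma S.
  by rewrite /basis_pattern basisEdim fullX size_map -cardE cS dimF /=.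
exists sh; split; last first.
  split => // psi hlin hnz.
  exact: (@sampling p n s t F chF hp hcard beta gamma hst hs ht hb hg hinj S hbasis psi hlin hnz).
move=> k l kl.
have e1 : S = (T k :|: T l) :|: \bigcup_(i | (i != k) && (i != l)) T i.
  by rewrite -setUA /S (bigD1 k) //= (bigD1 l) //= eq_sym.
have e2 : \sum_(i < r) #|T i| = (#|T k| + #|T l| + \sum_(i | (i != k) && (i != l)) #|T i|)%N.
  by rewrite -addnA (bigD1 k) //= (bigD1 l) //= eq_sym.
have hsum : \sum_(i < r) #|T i| = n.
  by rewrite (eq_bigr (fun _ => m)) // sum_nat_const card_ord rm.
have hR := card_bigcup_le _ _ (fun i => (i != k) && (i != l)) T.
have hU := (leq_card_setU (T k :|: T l) (\bigcup_(i | (i != k) && (i != l)) T i)).1.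
have hkl := leq_card_setU (T k) (T l).
have ge : (#|T k| + #|T l| <= #|T k :|: T l|)%N.
  move: hsum; rewrite e2 => hsum.
  have : (n <= #|T k :|: T l| + \sum_(i | (i != k) && (i != l)) #|T i|)%N.
    by rewrite -cS e1 (leq_trans hU) // leq_add2l.
  by rewrite -{1}hsum leq_add2r.
by rewrite -hkl.2 eqn_leq hkl.1 ge.
Qed.
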